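(* Let $M$ be a matroid of rank $d$, viewed as its collection of independent sets, and for $0\le i\le d$ let $f_i$ be the number of $i$-element independent sets of $M$. If $M$ has no coloops, then for every $0\le k\le d$, $$0\le \sum_{i=k}^{d}\binom{i}{k}(-2)^{d-i}f_i.$$
   Context: A coloop of a matroid is an element contained in every basis. *)

(* Defs.v *)
From mathcomp Require Import all_boot all_order all_algebra.
Set Implicit Arguments. Unset Strict Implicit. Unset Printing Implicit Defensive.
Import GRing.Theory Num.Theory.

Definition is_matroid (T : finType) (I : {set {set T}}) : Prop :=
  [/\ set0 \in I,
      (forall A B : {set T}, B \in I -> A \subset B -> A \in I) &
      (forall A B : {set T}, A \in I -> B \in I -> #|A| < #|B| ->
         exists2 x, x \in B :\: A & x |: A \in I)].

Definition is_basis (T : finType) (I : {set {set T}}) (B : {set T}) : Prop :=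
  B \in I /\ (forall C : {set T}, C \in I -> B \subset C -> C = B).

Definition is_coloop (T : finType) (I : {set {set T}}) (x : T) : Prop :=
  forall B : {set T}, is_basis I B -> x \in B.

Definition mrank (T : finType) (I : {set {set T}}) : nat :=
  \max_(A in I) #|A|.

Definition fvec (T : finType) (I : {set {set T}}) (i : nat) : nat :=
  #|[set A in I | #|A| == i]|.

(* Main.v *)
Require Import Defs.
From mathcomp Require Import all_boot all_order all_algebra.
From mathcomp Require Import zify.
Import GRing.Theory Num.Theory.

Module Aux.
Set Implicit Arguments. Unset Strict Implicit. Unset Printing Implicit Defensive.


Section Mat.
Variable T : finType.
Implicit Types (I : {set {set T}}) (A B C S X : {set T}).

Lemma mat_sub I A B : is_matroid I -> B \in I -> A \subset B -> A \in I.
Proof. by case=> _ H _; apply: H. Qed.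

Lemma mat_le I A : A \in I -> #|A| <= mrank I.
Proof. by move=> AI; rewrite /mrank; apply: (leq_bigmax_cond A). Qed.

Lemma mat_max I : is_matroid I -> exists2 B, B \in I & #|B| = mrank I.
Proof.
case=> I0 _ _; have : 0 < #|I| by apply/card_gt0P; exists set0.
by case/(eq_bigmax_cond (fun A : {set T} => #|A|)) => B BI E; exists B.
Qed.

Lemma mat_ext I A B : is_matroid I -> A \in I -> B \in I -> #|A| <= #|B| ->
  exists C, [/\ C \in I, A \subset C, C \subset A :|: B & #|C| = #|B|].
Proof.
move=> M; move: {2}(#|B| - #|A|) (erefl (#|B| - #|A|)) => n.
elim: n A => [|n IH] A E AI BI le.
  exists A; split => //; first exact: subsetUl; lia.
have lt : #|A| < #|B| by lia.
case: M => _ _ /(_ A B AI BI lt) [x] /setDP [xB xA] xAI.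
have E' : #|B| - #|x |: A| = n by rewrite cardsU1 xA; lia.
have le' : #|x |: A| <= #|B| by rewrite cardsU1 xA; lia.
have [C [CI sC sC2 cC]] := IH _ E' xAI BI le'.
exists C; split => //.
  by apply: subset_trans sC; apply: subsetUr.
apply: (subset_trans sC2); apply/subsetP => y; rewrite !inE.
by case/orP => [/orP [/eqP->|->]|->]; rewrite ?xB ?orbT.
Qed.

Lemma mat_basis I B : is_matroid I -> is_basis I B <-> (B \in I /\ #|B| = mrank I).
Proof.
move=> M; split.
  case=> BI maxB; split => //; apply/eqP; rewrite eqn_leq mat_le //=.
  have [B' B'I cB'] := mat_max M.
  have [|C [CI sBC _ cC]] := mat_ext M BI B'I; first by rewrite cB' mat_le.
  by rewrite -cB' -cC (maxB C CI sBC).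
case=> BI cB; split => // C CI sBC; apply/eqP; rewrite eq_sym eqEcard sBC /=.
by rewrite cB mat_le.
Qed.

Definition ncl I := forall x : T, exists B, [/\ B \in I, #|B| = mrank I & x \notin B].

Lemma ncl_of I : is_matroid I -> (forall x, ~ is_coloop I x) -> ncl I.
Proof.
move=> M H x; case: (boolP [exists B, [&& B \in I, #|B| == mrank I & x \notin B]]).
  by case/existsP => B /and3P [? /eqP ? ?]; exists B.
move=> /existsPn N; exfalso; apply: (H x) => B /(mat_basis _ M) [BI cB].
by move: (N B); rewrite BI cB eqxx /= negbK.
Qed.

End Mat.


Section Minors.
Variable T : finType.
Implicit Types (I : {set {set T}}) (A B C S X : {set T}).

Definition con I S := [set A : {set T} | [disjoint A & S] && (A :|: S \in I)].
Definition del I S := [set A in I | [disjoint A & S]].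

Lemma disjP A B : reflect (forall x, x \in A -> x \notin B) [disjoint A & B].
Proof.
rewrite -setI_eq0; apply: (iffP eqP) => [E x xA|H].
  apply/negP=> xB; have: x \in A :&: B by rewrite inE xA xB.
  by rewrite E inE.
apply/setP=> x; rewrite !inE; case xA: (x \in A) => //=.
by rewrite (negbTE (H x xA)).
Qed.

Lemma cardsU_disj A B : [disjoint A & B] -> #|A :|: B| = #|A| + #|B|.
Proof. by move=> D; rewrite cardsU (disjoint_setI0 D) cards0 subn0. Qed.

Lemma con_mat I S : is_matroid I -> S \in I -> is_matroid (con I S).
Proof.
move=> M SI; split.
- by rewrite inE set0U SI andbT; apply/disjP => x; rewrite inE.
- move=> A B; rewrite !inE => /andP [dB BI] sAB; apply/andP; split.
    by apply: disjointWl dB.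
  by apply: mat_sub M BI _; apply: setSU.
- move=> A B; rewrite !inE => /andP [dA AI] /andP [dB BI] lt.
  case: M => _ _ /(_ _ _ AI BI); rewrite !cardsU_disj // ltn_add2r.
  case/(_ lt) => x /setDP [xBS xAS] xI.
  have xS : x \notin S by apply: contra xAS => xS; rewrite inE xS orbT.
  have xB : x \in B by move: xBS; rewrite inE (negbTE xS) orbF.
  have xA : x \notin A by apply: contra xAS => xA; rewrite inE xA.
  exists x; first by rewrite inE xB xA.
  rewrite inE -setUA xI andbT; apply/disjP => y; rewrite !inE.
  by case/orP => [/eqP->//|]; apply/disjP.
Qed.

Lemma setDUK' A S : S \subset A -> (A :\: S) :|: S = A.
Proof.
move=> sSA; apply/setP => x; rewrite !inE.
case: (boolP (x \in S)) => xS /=; last by rewrite orbF.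
by rewrite ?orbT ?(subsetP sSA).
Qed.

Lemma del_mat I S : is_matroid I -> is_matroid (del I S).
Proof.
move=> M; split.
- by rewrite inE; case: M => -> _ _; apply/disjP => x; rewrite inE.
- move=> A B; rewrite !inE => /andP [BI dB] sAB; rewrite (mat_sub M BI sAB).
  exact: disjointWl dB.
- move=> A B; rewrite !inE => /andP [AI dA] /andP [BI dB] lt.
  case: M => _ _ /(_ _ _ AI BI lt) [x xBA xI]; exists x; rewrite // inE xI.
  apply/disjP => y; rewrite !inE; case/orP => [/eqP->|]; last exact/disjP.
  by move: xBA; rewrite inE => /andP [_]; apply/disjP.
Qed.

Lemma ext_con I S B : is_matroid I -> S \in I -> B \in I -> #|B| = mrank I ->
  exists C, [/\ C \in con I S, #|C| = mrank I - #|S| & C \subset B].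
Proof.
move=> M SI BI cB.
have [|C [CI sSC sC cC]] := mat_ext M SI BI; first by rewrite cB mat_le.
exists (C :\: S); split.
- rewrite inE setDUK' // CI andbT; apply/disjP => x; rewrite inE.
  by case/andP.
- by rewrite cardsDS // cC cB.
- apply/subsetP => x; rewrite inE => /andP [xS xC].
  by move: (subsetP sC x xC); rewrite inE (negbTE xS).
Qed.

Lemma con_rank I S : is_matroid I -> S \in I -> mrank (con I S) = mrank I - #|S|.
Proof.
move=> M SI; apply/eqP; rewrite eqn_leq; apply/andP; split.
  apply/bigmax_leqP => A; rewrite inE => /andP [d AI].
  have := mat_le AI; rewrite cardsU_disj //; lia.
have [B BI cB] := mat_max M.
have [C [CI <- _]] := ext_con M SI BI cB.
exact: mat_le.
Qed.

Lemma con_ncl I S : is_matroid I -> S \in I -> ncl I -> ncl (con I S).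
Proof.
move=> M SI N x; have [B [BI cB xB]] := N x.
have [C [CI cC sCB]] := ext_con M SI BI cB.
exists C; split => //; first by rewrite con_rank.
by apply: contra xB; apply: (subsetP sCB).
Qed.

Lemma sum_con (R : nmodType) I S (F : {set T} -> R) :
  (\sum_(A in I | S \subset A) F A = \sum_(A0 in con I S) F (A0 :|: S))%R.
Proof.
rewrite (reindex_onto (fun A0 => A0 :|: S) (fun A => A :\: S)); last first.
  by move=> A /andP [_ sSA]; apply: setDUK'.
apply: eq_bigl => A0; rewrite inE subsetUr andbT setDUl setDv setU0.
rewrite andbC; case: (A0 :|: S \in I); rewrite ?andbF ?andbT //.
by apply/eqP/idP => [<-|/setDidPl //]; apply/disjP => x; rewrite inE; case/andP.
Qed.

End Minors.


Section Series.
Variable T : finType.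
Implicit Types (A B C X : {set T}).
Variable I : {set {set T}}.
Hypothesis M : is_matroid I.
Hypothesis N : ncl I.
Variable e : T.

Definition ser := [set f | (f == e) ||
   [forall B in I, ((#|B| == mrank I) && (e \notin B)) ==> (f \in B)]].

Lemma ser_e : e \in ser.
Proof. by rewrite inE eqxx. Qed.

Lemma ser_B B f : B \in I -> #|B| = mrank I -> e \notin B -> f \in ser -> f != e ->
  f \in B.
Proof.
move=> BI cB eB; rewrite inE => /orP [->//|/forall_inP /(_ B BI)].
by rewrite cB eqxx eB.
Qed.

Lemma ser_miss B y z : B \in I -> #|B| = mrank I -> y \in ser -> z \in ser ->
  y \notin B -> z \notin B -> y = z.
Proof.
move=> BI cB yS zS yB zB.
case: (boolP (e \in B)) => eB; last first.
  case: (eqVneq y e) => [->|ye]; last by rewrite (ser_B BI cB eB yS ye) in yB.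
  case: (eqVneq z e) => [->//|ze]; by rewrite (ser_B BI cB eB zS ze) in zB.
have [B2 [B2I cB2 eB2]] := N e.
have BeI : B :\ e \in I by apply: mat_sub M BI _; apply: subD1set.
have cBe : #|B :\ e| = (mrank I).-1 by rewrite (cardsD1 e B) eB in cB; lia.
have lt : #|B :\ e| < #|B2|.
  have : 0 < #|B| by apply/card_gt0P; exists e.
  rewrite cBe cB2; lia.
case: M => _ _ /(_ _ _ BeI B2I lt) [x /setDP [xB2 xBe] xI].
have xe : x != e by apply: contra eB2 => /eqP <-.
have cB' : #|x |: (B :\ e)| = mrank I by rewrite cardsU1 xBe; lia.
have eB' : e \notin x |: (B :\ e) by rewrite !inE eq_sym (negbTE xe) eqxx.
have ye : y != e by apply: contra yB => /eqP ->.
have ze : z != e by apply: contra zB => /eqP ->.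
move: (ser_B xI cB' eB' yS ye) (ser_B xI cB' eB' zS ze).
rewrite !inE (negbTE yB) (negbTE zB) !andbF !orbF => /eqP -> /eqP ->.
done.
Qed.


Lemma ser_add A0 y : A0 \in I -> [disjoint A0 & ser] -> y \in ser ->
  A0 :|: (ser :\ y) \in I.
Proof.
move=> A0I dA yS; have [B1 [B1I cB1 yB1]] := N y.
have [|C [CI sAC sC cC]] := mat_ext M A0I B1I; first by rewrite cB1 mat_le.
refine (mat_sub M CI _); rewrite subUset sAC /=; apply/subsetP => z.
rewrite inE => /andP [zy zS]; apply/negPn/negP => zC.
have yC : y \notin C.
  apply/negP => /(subsetP sC); rewrite inE (negbTE yB1) orbF.
  by move/(disjP _ _ dA) => /negP; rewrite yS.
have := ser_miss CI (etrans cC cB1) zS yS zC yC.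
by move=> E; move: zy; rewrite E inE eqxx.
Qed.

Lemma ser_proper A0 X : A0 \in I -> [disjoint A0 & ser] -> X \proper ser ->
  A0 :|: X \in I.
Proof.
move=> A0I dA /properP [sXS [y yS yX]].
apply: mat_sub M (ser_add A0I dA yS) _; apply: setUS.
apply/subsetP => z zX; rewrite in_setD1 (subsetP sXS) // andbT.
by apply: contra yX => /eqP <-.
Qed.

Lemma ser_B2 B : B \in I -> #|B| = mrank I -> e \notin B ->
  B :&: ser = ser :\ e.
Proof.
move=> BI cB eB; apply/setP => f; rewrite in_setI in_setD1.
case: (eqVneq f e) => [->|fe] /=; first by rewrite (negbTE eB).
case fS: (f \in ser); rewrite ?andbF ?andbT //.
exact: ser_B BI cB eB fS fe.
Qed.

Lemma ser_card_le : #|ser| <= (mrank I).+1.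
Proof.
have [B2 [B2I cB2 eB2]] := N e.
have := subsetIl B2 ser; move/subset_leq_card.
rewrite ser_B2 // cB2 (cardsD1 e ser) ser_e; lia.
Qed.

Lemma del_rank : mrank (del I ser) + #|ser| = (mrank I).+1.
Proof.
have [B2 [B2I cB2 eB2]] := N e.
have cS := cardsD1 e ser; rewrite ser_e in cS.
have c2 : #|B2 :\: ser| = #|B2| - #|ser :\ e| by rewrite cardsD ser_B2.
have sSB : #|ser :\ e| <= #|B2| by rewrite -(ser_B2 B2I cB2 eB2) subset_leq_card // subsetIl.
suff -> : mrank (del I ser) = mrank I + 1 - #|ser| by lia.
apply/eqP; rewrite eqn_leq; apply/andP; split.
  apply/bigmax_leqP => A; rewrite inE => /andP [AI dA].
  have := mat_le (ser_add AI dA ser_e); rewrite cardsU_disj; first lia.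
  by apply/disjP => x xA; rewrite inE negb_and negbK (disjP _ _ dA x xA) orbT.
have : B2 :\: ser \in del I ser.
  rewrite !inE; apply/andP; split.
    by apply: mat_sub M B2I _; apply: subsetDl.
  by apply/disjP => x; rewrite inE => /andP [].
move/mat_le; rewrite c2; lia.
Qed.

Lemma del_ncl : ncl (del I ser).
Proof.
have key B : B \in I -> #|B| = mrank I -> e \notin B ->
    B :\: ser \in del I ser /\ #|B :\: ser| = mrank (del I ser).
  move=> BI cB eB; split.
    rewrite !inE; apply/andP; split.
      by apply: mat_sub M BI _; apply: subsetDl.
    by apply/disjP => x; rewrite inE => /andP [].
  rewrite cardsD ser_B2 //.
  have := del_rank; have := cardsD1 e ser; rewrite ser_e.
  have : #|ser :\ e| <= #|B| by rewrite -(ser_B2 BI cB eB) subset_leq_card // subsetIl.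
  lia.
move=> x; case: (boolP (x \in ser)) => xS.
  have [B2 [B2I cB2 eB2]] := N e; have [D cD] := key _ B2I cB2 eB2.
  by exists (B2 :\: ser); split => //; rewrite inE xS.
have xe : x != e by apply: contra xS => /eqP ->; apply: ser_e.
move: xS; rewrite inE (negbTE xe) /= => /forall_inP /=.
case: (boolP [exists B in I, (#|B| == mrank I) && (e \notin B) && (x \notin B)]).
  case/exists_inP => B BI /andP [/andP [/eqP cB eB] xB] _.
  have [D cD] := key _ BI cB eB.
  by exists (B :\: ser); split => //; rewrite inE negb_and xB orbT.
move/exists_inPn => H H2; exfalso; apply: H2 => B BI; apply/implyP => /andP [cB eB].
by move: (H B BI); rewrite cB eB /= negbK.
Qed.

End Series.


Section Sums.
Local Open Scope ring_scope.
Variable T : finType.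

Lemma sum_subsets (S : {set T}) (F : nat -> int) :
  \sum_(X : {set T} | X \subset S) F #|X| = \sum_(i < #|S|.+1) F i *+ 'C(#|S|, i).
Proof.
rewrite (partition_big (fun X : {set T} => (inord #|X| : 'I_(#|S|.+1))) xpredT) //=.
apply: eq_bigr => i _; rewrite -cards_draws -sumr_const.
apply: eq_big => [X|X]; rewrite ?inE.
  case sX: (X \subset S) => //=; rewrite -val_eqE /= inordK //.
  by rewrite ltnS subset_leq_card.
case/andP => sX /eqP <-; rewrite inordK //.
by rewrite ltnS subset_leq_card.
Qed.

Lemma sum_subsets2 (S : {set T}) :
  \sum_(X : {set T} | X \subset S) (-2 : int) ^+ (#|S| - #|X|) = (-1) ^+ #|S|.
Proof.
rewrite (sum_subsets S (fun x => (-2 : int) ^+ (#|S| - x))).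
have -> : (-1 : int) = -2 + 1 by [].
rewrite exprDn; apply: eq_bigr => i _; by rewrite expr1n mulr1.
Qed.

Lemma csum_ge0 (S : {set T}) :
  0 <= \sum_(X : {set T} | X \proper S) (-2 : int) ^+ (#|S|.-1 - #|X|).
Proof.
set c := \sum_(X | _) _.
have E : -2 * c = (-1) ^+ #|S| - 1.
  rewrite -sum_subsets2 (bigD1 S) //= subnn expr0 addrC addrK mulr_sumr.
  apply: eq_big => [X|X]; first by rewrite properEneq andbC.
  move/proper_card => lt; rewrite -exprS; congr (_ ^+ _); lia.
move: E; rewrite -signr_odd; case: (odd _) => /=; rewrite ?expr0 ?expr1; lia.
Qed.

End Sums.


Section G.
Local Open Scope ring_scope.
Variable T : finType.

Definition g (I : {set {set T}}) : int := \sum_(A in I) (-2) ^+ (mrank I - #|A|).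

Lemma g_decomp (I : {set {set T}}) e : is_matroid I -> ncl I ->
  let S := ser I e in
  g I = g (con I S) + (\sum_(X : {set T} | X \proper S) (-2 : int) ^+ (#|S|.-1 - #|X|)) * g (del I S).
Proof.
move=> M N S.
rewrite /g (bigID (fun A : {set T} => S \subset A) (mem I)) /=; congr (_ + _).
  rewrite sum_con; apply: eq_bigr => A0; rewrite inE => /andP [dA AI].
  have SI : S \in I by apply: mat_sub M AI _; apply: subsetUr.
  rewrite con_rank // cardsU_disj //; congr (_ ^+ _); lia.
rewrite (partition_big (fun A => A :\: S) (mem (del I S))) /=; last first.
  move=> A /andP [AI _]; rewrite !inE; apply/andP; split.
    by apply: mat_sub M AI _; apply: subsetDl.
  by apply/disjP => x; rewrite inE => /andP [].
rewrite mulr_sumr; apply: eq_bigr => A0; rewrite inE => /andP [A0I dA].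
rewrite (reindex_onto (fun X => A0 :|: X) (fun A => A :&: S)); last first.
  by move=> A /andP [_ /eqP <-]; rewrite setUC setID.
have eA0 : A0 :\: S = A0 by apply/setDidPl.
have iA0 : A0 :&: S = set0 by apply: disjoint_setI0.
rewrite mulrC mulr_sumr; apply: eq_big => [X|X].
  rewrite setDUl setIUl eA0 iA0 set0U.
  apply/idP/idP.
    case/andP => /andP [/andP [_ nS] _] /eqP E.
    have sXS : X \subset S by rewrite -E subsetIr.
    rewrite properEneq sXS andbT; apply: contra nS => /eqP ->; exact: subsetUr.
  move=> pX; have sXS := proper_sub pX.
  rewrite (ser_proper M N A0I dA pX) /= (setIidPl sXS) eqxx andbT.
  have -> : X :\: S = set0 by apply/eqP; rewrite setD_eq0.
  rewrite setU0 eqxx andbT; apply/negP => sS.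
  have : S \subset X.
    apply/subsetP => y yS; move: (subsetP sS y yS); rewrite inE.
    by case/orP => // yA; move: (disjP _ _ dA y yA); rewrite yS.
  by move=> sSX; move: pX; rewrite properEneq (eqP _ : X == S) ?eqxx //; rewrite eqEsubset sXS sSX.
move=> /andP [/andP [/andP [_ nS] _] /eqP E].
have sXS : X \subset S by rewrite -E subsetIr.
have pX : X \proper S.
  by rewrite properEneq sXS andbT; apply: contra nS => /eqP ->; exact: subsetUr.
rewrite -exprD; congr (_ ^+ _).
have := del_rank M N e; rewrite -/S => dr.
have le1 : (#|A0| <= mrank (del I S))%N by apply: mat_le; rewrite inE A0I.
have le2 := proper_card pX.
have dX : [disjoint A0 & X].
  apply/disjP => y yA; apply: contra (disjP _ _ dA y yA); exact: (subsetP (proper_sub pX)).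
rewrite cardsU_disj //; lia.
Qed.


Lemma con_card (I : {set {set T}}) (S : {set T}) e : is_matroid I -> e \in S ->
  (#|con I S| < #|I|)%N.
Proof.
move=> M eS.
have inj : {in con I S &, injective (fun A0 => A0 :|: S)}.
  move=> A B; rewrite !inE => /andP [dA _] /andP [dB _] E.
  have : (A :|: S) :\: S = (B :|: S) :\: S by rewrite E.
  by rewrite !setDUl setDv !setU0 (setDidPl dA) (setDidPl dB).
rewrite -(card_in_imset inj); apply: proper_card; apply/properP; split.
  apply/subsetP => A /imsetP [A0]; rewrite inE => /andP [_ AI] ->; exact AI.
exists set0; first by case: M.
apply/imsetP => [[A0 _ E]]; have : e \in A0 :|: S by rewrite inE eS orbT.
by rewrite -E inE.
Qed.

Lemma del_card (I : {set {set T}}) (S : {set T}) e : [set e] \in I -> e \in S ->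
  (#|del I S| < #|I|)%N.
Proof.
move=> eI eS; apply: proper_card; apply/properP; split.
  by apply/subsetP => A; rewrite inE => /andP [].
exists [set e] => //; rewrite inE eI /=; apply/negP => /disjP /(_ e).
by rewrite inE eqxx eS => /(_ isT).
Qed.

Lemma g_ge0 n (I : {set {set T}}) : (#|I| < n)%N -> is_matroid I -> ncl I -> 0 <= g I.
Proof.
elim: n I => [//|n IH] I lt M N.
case: (boolP [exists e, [set e] \in I]); last first.
  move/existsPn => H.
  have A0 A : A \in I -> A = set0.
    move=> AI; apply/setP => x; rewrite inE; apply/negP => xA.
    by move: (H x); rewrite (mat_sub M AI _) // sub1set.
  have r0 : mrank I = 0%N.
    by apply/eqP; rewrite -leqn0; apply/bigmax_leqP => A /A0 ->; rewrite cards0.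
  by rewrite /g; apply: sumr_ge0 => A AI; rewrite r0 sub0n expr0.
case/existsP => e eI; rewrite (g_decomp e M N).
have eS := ser_e I e.
apply: addr_ge0; last apply: mulr_ge0.
- case: (boolP (ser I e \in I)) => SI.
    apply: IH; first by apply: leq_trans (con_card M eS) _; rewrite -ltnS.
      exact: con_mat.
    exact: con_ncl.
  rewrite /g big1 // => A; rewrite inE => /andP [_ AI].
  by move: SI; rewrite (mat_sub M AI) // subsetUr.
- exact: csum_ge0.
- apply: IH; first by apply: leq_trans (del_card eI eS) _; rewrite -ltnS.
    exact: del_mat.
  exact: del_ncl.
Qed.

End G.

End Aux.
Import Aux.

Local Open Scope ring_scope.

Theorem theorem0p3 (T : finType) (I : {set {set T}}) (d : nat) :
  is_matroid I -> mrank I = d ->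
  (forall x : T, ~ is_coloop I x) ->
  forall k : nat, (k <= d)%N ->
    0 <= \sum_(k <= i < d.+1)
           ('C(i, k)%:Z * (-2) ^+ (d - i) * (fvec I i)%:Z : int).
Proof.
move=> M rd H k kd; have N := ncl_of M H.
pose w (A : {set T}) : int := (-2) ^+ (d - #|A|).
have E1 : \sum_(k <= i < d.+1) ('C(i, k)%:Z * (-2) ^+ (d - i) * (fvec I i)%:Z : int)
    = \sum_(0 <= i < d.+1) \sum_(A in I | #|A| == i) 'C(#|A|, k)%:Z * w A.
  rewrite (@big_cat_nat _ _ _ k 0 d.+1) //=; last by rewrite ltnW.
  rewrite [X in _ = X + _]big1_seq ?add0r; last first.
    move=> i /andP [_]; rewrite mem_index_iota => /andP [_ ik].
    by apply: big1 => A /andP [_ /eqP ->]; rewrite bin_small // mul0r.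
  apply: eq_bigr => i _.
  rewrite (eq_bigr (fun _ => 'C(i, k)%:Z * (-2) ^+ (d - i))); last first.
    by move=> A /andP [_ /eqP E]; rewrite /w E.
  rewrite (eq_bigl (fun A => A \in [set A in I | #|A| == i])); last by move=> A; rewrite inE.
  by rewrite sumr_const /fvec -[X in _ = X]mulr_natr natz.
rewrite E1 big_mkord.
have E2 : \sum_(i < d.+1) \sum_(A in I | #|A| == i) 'C(#|A|, k)%:Z * w A
    = \sum_(A in I) 'C(#|A|, k)%:Z * w A.
  rewrite [RHS](partition_big (fun A : {set T} => inord #|A| : 'I_d.+1) xpredT) //=.
  apply: eq_bigr => i _; apply: eq_bigl => A.
  case AI: (A \in I) => //=; rewrite -val_eqE /= inordK // ltnS -rd.
  exact: mat_le.
rewrite E2.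
have E3 : \sum_(A in I) 'C(#|A|, k)%:Z * w A
    = \sum_(K : {set T} | #|K| == k) \sum_(A in I | K \subset A) w A.
  rewrite (eq_bigr (fun A : {set T} => \sum_(K : {set T} | (K \subset A) && (#|K| == k)) w A)); last first.
    move=> A _; rewrite -cards_draws.
    rewrite (eq_bigl (fun K => K \in [set K : {set T} | K \subset A & #|K| == k])); last first.
      by move=> K; rewrite inE.
    by rewrite sumr_const -[X in _ = X]mulr_natr natz mulrC.
  rewrite (exchange_big_dep (fun K : {set T} => #|K| == k)) /=; last by move=> A K _ /andP [].
  by apply: eq_bigr => K /eqP Kk; apply: eq_bigl => A; rewrite Kk eqxx andbT.
rewrite E3; apply: sumr_ge0 => K /eqP Kk.
case: (boolP (K \in I)) => KI; last first.
  rewrite big1 // => A /andP [AI sKA]; exfalso; move: KI.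
  by rewrite (mat_sub M AI sKA).
rewrite sum_con.
have -> : \sum_(A0 in con I K) w (A0 :|: K) = g (con I K).
  rewrite /g con_rank // rd; apply: eq_bigr => A0; rewrite inE => /andP [dA _].
  rewrite /w cardsU_disj //; congr (_ ^+ _); lia.
apply: (@g_ge0 _ #|con I K|.+1) => //; first exact: con_mat.
exact: con_ncl.
Qed.
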